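(* With the notation of the context, let $\beta^*=\inf_{x\in\Delta}F(x)$. If $r$ is a relation of type 4b, then $x^*\in C_r=\{x\in\Delta: x_r+X_r-x_rX_r<3/4\}$ for every $x^*\in\Delta$ with $F(x^* )=\beta^*$.
   Context: Fix an integer $n\ge2$ and free generators $\xi_1,\dots,\xi_n$ of a free group; throughout $i,j,k\in\{1,\dots,n\}$ and $t,s,p\in\{-1,+1\}$. Let $\Psi$ be the set of reduced words $\xi_i^{2t}$; $\xi_i^t\xi_j^{2s}$ ($i\ne j$); $\xi_i^t\xi_j^s\xi_k^p$ ($i\ne j$, $j\ne k$). For a letter $\xi_a^x$ let $S(\xi_a^x)\subset\Psi$ be the set of words in $\Psi$ beginning with $\xi_a^x$, namely $\{\xi_a^{2x}\}\cup\{\xi_a^x\xi_j^{2s}\}\cup\{\xi_a^x\xi_j^s\xi_k^p\}$; for $a\ne b$ let $S(\xi_a^x\xi_b^y)=\{\xi_a^x\xi_b^{2y}\}\cup\{\xi_a^x\xi_b^y\xi_k^p: k\ne b\}$. A relation $r$ is a pair $(\psi_r,\Psi_r)$ with $\psi_r\in\Psi$, $\Psi_r\subseteq\Psi$. Let $\mathcal{F}$ be the collection of the following relations (indices $i_0\ne j_0$, in type 5a $i_0,j_0,k_0$ pairwise distinct, all signs arbitrary): 1a: $\psi_r=\xi_{i_0}^{2t_0}$, $\Psi_r=\Psi\setminus S(\xi_{i_0}^{t_0})$; 2b: $\psi_r=\xi_{i_0}^{t_0}\xi_{j_0}^{2s_0}$, $\Psi_r=\Psi\setminus S(\xi_{i_0}^{t_0}\xi_{j_0}^{s_0})$;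 3a: $\psi_r=\xi_{i_0}^{t_0}\xi_{j_0}^{s_0}\xi_{i_0}^{t_0}$, $\Psi_r=\Psi\setminus S(\xi_{j_0}^{s_0}\xi_{i_0}^{t_0})$; 4b: $\psi_r=\xi_{i_0}^{t_0}\xi_{j_0}^{s_0}\xi_{i_0}^{-t_0}$, $\Psi_r=S(\xi_{i_0}^{t_0})$; 5a: $\psi_r=\xi_{i_0}^{t_0}\xi_{j_0}^{s_0}\xi_{k_0}^{p_0}$, $\Psi_r=\Psi\setminus S(\xi_{j_0}^{s_0}\xi_{k_0}^{p_0})$. Let $\Delta=\{x\in\mathbb{R}^\Psi: x(\psi)>0\ \forall\psi,\ \sum_{\psi}x(\psi)=1\}$. For a relation $r$ and $x\in\Delta$ put $x_r=x(\psi_r)$, $X_r=\sum_{\psi\in\Psi_r}x(\psi)$, $f_r(x)=\frac{1-x_r}{x_r}\cdot\frac{1-X_r}{X_r}$, and $F(x)=\max_{r\in\mathcal{F}}f_r(x)$. *)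

(* Defs.v *)
From HB Require Import structures.
From mathcomp Require Import all_boot all_order all_algebra.
From mathcomp Require Import boolp classical_sets reals.
Set Implicit Arguments. Unset Strict Implicit. Unset Printing Implicit Defensive.
Import Order.TTheory GRing.Theory Num.Theory.
Local Open Scope ring_scope.
Local Open Scope classical_set_scope.

(* A letter xi_i^t : generator index i : 'I_n and sign t (true = +1, false = -1). *)
Definition letter (n : nat) := ('I_n * bool)%type.

(* A candidate word of length 2 or 3 as a sequence of letters:
   (a, b, None) is the word  a b, (a, b, Some c) is the word  a b c. *)
Definition rawword (n : nat) := (letter n * letter n * option (letter n))%type.

(* Membership in Psi:
   xi_i^{2t}          = [a; a]
   xi_i^t xi_j^{2s}   = [a; b; b]  with idx a <> idx b
   xi_i^t xi_j^s xi_k^p = [a; b; c] with idx a <> idx b, idx b <> idx c. *)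
Definition inPsi (n : nat) (w : rawword n) : bool :=
  match w with
  | (a, b, None) => a == b
  | (a, b, Some c) => (a.1 != b.1) && ((b == c) || (b.1 != c.1))
  end.

Definition Psi (n : nat) := {w : rawword n | inPsi w}.

Definition word (n : nat) (w : Psi n) : seq (letter n) :=
  match val w with
  | (a, b, None) => [:: a; b]
  | (a, b, Some c) => [:: a; b; c]
  end.

Definition S1 (n : nat) (a : letter n) : {set Psi n} :=
  [set w : Psi n | take 1 (word w) == [:: a]].
Definition S2 (n : nat) (a b : letter n) : {set Psi n} :=
  [set w : Psi n | take 2 (word w) == [:: a; b]].

Definition relF (n : nat) := (Psi n * {set Psi n})%type.

Definition type1a (n : nat) (r : relF n) : bool :=
  [exists i0 : 'I_n, exists t0 : bool,
    (word r.1 == [:: (i0, t0); (i0, t0)]) && (r.2 == ~: S1 (i0, t0))].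

Definition type2b (n : nat) (r : relF n) : bool :=
  [exists i0 : 'I_n, exists j0 : 'I_n, exists t0 : bool, exists s0 : bool,
    [&& i0 != j0, word r.1 == [:: (i0, t0); (j0, s0); (j0, s0)]
      & r.2 == ~: S2 (i0, t0) (j0, s0)]].

Definition type3a (n : nat) (r : relF n) : bool :=
  [exists i0 : 'I_n, exists j0 : 'I_n, exists t0 : bool, exists s0 : bool,
    [&& i0 != j0, word r.1 == [:: (i0, t0); (j0, s0); (i0, t0)]
      & r.2 == ~: S2 (j0, s0) (i0, t0)]].

Definition type4b (n : nat) (r : relF n) : bool :=
  [exists i0 : 'I_n, exists j0 : 'I_n, exists t0 : bool, exists s0 : bool,
    [&& i0 != j0, word r.1 == [:: (i0, t0); (j0, s0); (i0, ~~ t0)]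
      & r.2 == S1 (i0, t0)]].

Definition type5a (n : nat) (r : relF n) : bool :=
  [exists i0 : 'I_n, exists j0 : 'I_n, exists k0 : 'I_n,
   exists t0 : bool, exists s0 : bool, exists p0 : bool,
    [&& i0 != j0, j0 != k0, i0 != k0,
        word r.1 == [:: (i0, t0); (j0, s0); (k0, p0)]
      & r.2 == ~: S2 (j0, s0) (k0, p0)]].

Definition Fam (n : nat) : {set relF n} :=
  [set r | [|| type1a r, type2b r, type3a r, type4b r | type5a r]].

Definition Delta (R : realType) (n : nat) : set (Psi n -> R) :=
  [set x | (forall p, 0 < x p) /\ \sum_(p : Psi n) x p = 1].

Definition xr (R : realType) (n : nat) (r : relF n) (x : Psi n -> R) : R := x r.1.
Definition Xr (R : realType) (n : nat) (r : relF n) (x : Psi n -> R) : R :=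
  \sum_(p in r.2) x p.

Definition fr (R : realType) (n : nat) (r : relF n) (x : Psi n -> R) : R :=
  ((1 - xr r x) / xr r x) * ((1 - Xr r x) / Xr r x).

(* F(x) = max_{r in F} f_r(x)  (f_r > 0 on Delta, so the seed 0 is harmless). *)
Definition Fmax (R : realType) (n : nat) (x : Psi n -> R) : R :=
  \big[Num.max/0]_(r in Fam n) fr r x.

Definition beta_star (R : realType) (n : nat) : R :=
  inf [set Fmax x | x in @Delta R n].

(* Main.v *)
Require Import Defs.
From HB Require Import structures.
From mathcomp Require Import all_boot all_order all_algebra.
From mathcomp Require Import boolp classical_sets reals.
From mathcomp Require Import ring lra zify.
Import Order.TTheory GRing.Theory Num.Theory.
Set Implicit Arguments. Unset Strict Implicit.
Local Open Scope ring_scope.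



Section Comb.
Variable n : nat.

Definition linv (a : letter n) : letter n := (a.1, ~~ a.2).
Definition firstl (p : Psi n) : letter n := (val p).1.1.

Lemma inS1 (p : Psi n) (a : letter n) : (p \in S1 a) = (firstl p == a).
Proof.
rewrite inE /firstl /word; case: p => [[[x y] [z|]] H] /=; by rewrite eqseq_cons andbT.
Qed.

Lemma S2_sub (a b : letter n) : S2 a b \subset S1 a.
Proof.
apply/fintype.subsetP => p; rewrite inE inS1 /firstl /word; case: p => [[[x y] [z|]] H] /=;
  by rewrite !eqseq_cons andbT => /andP[].
Qed.

Lemma sumPsi (R : realType) (F : rawword n -> R) (P : pred (rawword n)) :
  \sum_(p : Psi n | P (val p)) F (val p) = \sum_(w | inPsi w && P w) F w.
Proof.
rewrite [RHS](reindex_omap (val : Psi n -> rawword n) insub); last first.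
  by move=> i /andP[iA Pi]; rewrite insubT.
apply: eq_bigl => -[i iA] /=; by rewrite insubT iA /= eqxx andbT.
Qed.

Lemma sum_option (R : realType) (T : finType) (F : option T -> R) :
  \sum_(o : option T) F o = F None + \sum_(t : T) F (Some t).
Proof.
rewrite (bigD1 None) //=; congr (_ + _).
rewrite (reindex_omap Some (fun o => o)); last by case=> [t|] /=; rewrite ?eqxx.
by apply: eq_bigl => t /=; rewrite eqxx.
Qed.

Lemma card_neq (i : 'I_n) : #|[pred c : letter n | c.1 != i]| = (n.*2 - 2)%N.
Proof.
have H1 : #|[pred c : letter n | c.1 == i]| = 2%N.
  have C2 : #|pred2 (i, true) (i, false)| = 2%N by rewrite card2 xpair_eqE eqxx.
  rewrite -C2; apply: eq_card => -[j b] /=.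
  rewrite !inE !xpair_eqE; case: b; by rewrite ?andbT ?andbF ?orbF.
have := cardC [pred c : letter n | c.1 == i].
rewrite card_prod card_ord card_bool H1 => H2.
have -> : #|[pred c : letter n | c.1 != i]| = #|[predC [pred c : letter n | c.1 == i]]|.
  by apply: eq_card => c; rewrite !inE.
by move: H2; rewrite -muln2 => <-; rewrite addKn.
Qed.

End Comb.



Section Weights.
Variable R : realType.
Variable n : nat.

Lemma partS1 (F : Psi n -> R) : \sum_p F p = \sum_(a : letter n) \sum_(p in S1 a) F p.
Proof.
transitivity (\sum_p \sum_(a : letter n | firstl p == a) F p).
  apply: eq_bigr => p _; by rewrite (big_pred1 (firstl p)).
rewrite (exchange_big_dep xpredT) //=.
by apply: eq_bigr => a _; apply: eq_bigl => p; rewrite inS1.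
Qed.

Definition is4r (w : rawword n) : bool :=
  match w with (a, b, Some c) => c == linv a | _ => false end.
Definition Gr (K : R) (w : rawword n) : R := if is4r w then K else 1.
Definition gK (K : R) (p : Psi n) : R := Gr K (val p).
Definition mR : R := (n.*2 - 2)%:R.

Lemma sum_raw (H : rawword n -> R) :
  \sum_w H w = \sum_(x : letter n) \sum_(y : letter n) \sum_(o : option (letter n)) H (x, y, o).
Proof.
transitivity (\sum_(xy : letter n * letter n) \sum_(o : option (letter n)) H (xy, o)).
  by rewrite pair_bigA; apply: eq_bigr => -[xy o] _.
rewrite (pair_bigA _ (fun x y => \sum_(o : option (letter n)) H (x, y, o))).
by apply: eq_bigr => -[x y] _.
Qed.

Lemma W_val (K : R) (a : letter n) : \sum_(p in S1 a) gK K p = 1 + mR * (mR + K).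
Proof.
transitivity (\sum_(w | inPsi w && (w.1.1 == a)) Gr K w).
  by rewrite -(sumPsi (Gr K) (fun w => w.1.1 == a)); apply: eq_bigl => p; rewrite inS1.
rewrite big_mkcond sum_raw /= [LHS](bigD1 a) //=.
rewrite [X in _ + X]big1 ?addr0; last first.
  move=> x xa; apply: big1 => y _; apply: big1 => o _.
  by rewrite (negbTE xa) andbF.
under eq_bigr => y _ do rewrite sum_option eqxx andbT.
rewrite big_split /=.
rewrite [X in X + _](bigD1 a) //= eqxx /Gr /= big1 ?addr0; last first.
  by move=> y ya; rewrite eq_sym (negbTE ya).
congr (_ + _).
have inner : forall y : letter n, a.1 != y.1 ->
  \sum_(c : letter n) (if (a.1 != y.1) && ((y == c) || (y.1 != c.1)) then Gr K (a, y, Some c) else 0)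
  = mR + K.
  move=> y ay; rewrite ay /=.
  rewrite -big_mkcond (bigD1 y) ?eqxx //=.
  have -> : Gr K (a, y, Some y) = 1.
    rewrite /Gr /= /linv; case: eqP => // E; move: ay; by rewrite E /= eqxx.
  rewrite (eq_bigl (fun c : letter n => c.1 != y.1)); last first.
    move=> c /=; case: (eqVneq c y) => [->|cy]; first by rewrite eqxx.
    by rewrite /= andbT eq_sym.
  rewrite /Gr /=.
  rewrite (eq_bigr (fun c => 1 + (if c == linv a then K - 1 else 0))); last first.
    by move=> c _; rewrite /Gr /=; case: eqP => _; rewrite ?addr0 // addrC subrK.
  rewrite big_split /= sumr_const card_neq -/mR.
  rewrite (bigD1 (linv a)) /=; last exact: ay.
  rewrite eqxx big1 ?addr0; last by move=> c /andP[_ /negbTE ->].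
  rewrite /mR; lra.
rewrite (eq_bigr (fun y : letter n => if y.1 != a.1 then mR + K else 0)); last first.
  move=> y _; case: (eqVneq a.1 y.1) => E.
    by apply: big1.
  rewrite /= -(inner y E) E /=; apply: eq_bigr => c _; by rewrite andbT.
by rewrite -big_mkcond sumr_const card_neq -/mR -mulr_natr mulrC.
Qed.

End Weights.



Section YSide.
Variable R : realType.
Variable n : nat.
Hypothesis hn : (2 <= n)%N.

Let N : R := n%:R.

Lemma mR_eq : mR R n = 2 * N - 2.
Proof.
rewrite /mR natrB; last by lia.
by rewrite -muln2 natrM mulrC.
Qed.

Lemma N2 : 2 <= N.
Proof. by rewrite /N (_ : 2 = 2%:R :> R) // ler_nat. Qed.

Lemma head_word (p : Psi n) x0 : head x0 (word p) = firstl p.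
Proof. by case: p => [[[a b] [c|]] H]. Qed.

Lemma is4_word3 (p : Psi n) x y z : word p = [:: x; y; z] -> is4r (val p) = (z == linv x).
Proof. by case: p => [[[a b] [c|]] H] //=; rewrite /word /=; case=> -> _ ->. Qed.

Lemma is4_word2 (p : Psi n) x y : word p = [:: x; y] -> is4r (val p) = false.
Proof. by case: p => [[[a b] [c|]] H]. Qed.

Let m := mR R n.
Let K : R := 2 * m.
Let Z : R := \sum_(p : Psi n) gK K p.
Definition yv (p : Psi n) : R := gK K p / Z.

Lemma m2 : 2 <= m.
Proof. rewrite /m mR_eq; have := N2; lra. Qed.

Lemma Z_eq : Z = 2 * N * (1 + m * (m + K)).
Proof.
rewrite /Z partS1 (eq_bigr (fun _ => 1 + m * (m + K))); last by move=> a _; rewrite W_val.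
rewrite sumr_const card_prod card_ord card_bool -[LHS]mulr_natr natrM /N; lra.
Qed.

Lemma Zpos : 0 < Z.
Proof. rewrite Z_eq /K; have := m2; have := N2; nra. Qed.

Lemma gpos (p : Psi n) : 0 < gK K p.
Proof. rewrite /gK /Gr; case: ifP => _ //; rewrite /K; have := m2; lra. Qed.

Lemma Delta_y : Delta yv.
Proof.
split; first by move=> p; rewrite /yv divr_gt0 ?gpos ?Zpos.
rewrite /yv -mulr_suml -/Z mulfV //; have := Zpos; lra.
Qed.

Lemma sumS1_y (a : letter n) : \sum_(p in S1 a) yv p = 1 / (2 * N).
Proof.
rewrite /yv -mulr_suml W_val -/m Z_eq; field.
have := m2; have := N2; rewrite /K; nra.
Qed.

Lemma Nneq0 : n%:R != 0 :> R.
Proof. by rewrite gt_eqF //; have := N2; rewrite /N; lra. Qed.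
Lemma mneq0 : (n.*2 - 2)%:R != 0 :> R.
Proof. by rewrite gt_eqF //; have := m2; rewrite /m /mR; lra. Qed.
Lemma Zneq0 : Z != 0.
Proof. by rewrite gt_eqF // Zpos. Qed.

Lemma sum_compl (S : {set Psi n}) : \sum_(p in ~: S) yv p = 1 - \sum_(p in S) yv p.
Proof.
rewrite -[1](proj2 Delta_y) [in RHS](bigID (mem S)) /= addrAC subrr add0r.
by apply: eq_bigl => p; rewrite inE.
Qed.

Lemma y_ge0 (p : Psi n) : 0 <= yv p.
Proof. exact/ltW/(proj1 Delta_y). Qed.

Lemma sum_sub (S : {set Psi n}) a : S \subset S1 a ->
  \sum_(p in S) yv p <= \sum_(p in S1 a) yv p.
Proof.
move=> sub; rewrite [X in _ <= X](big_setID S) /= (finset.setIidPr sub).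
by rewrite lerDl sumr_ge0 // => p _; apply: y_ge0.
Qed.

Lemma Nm_pos : 0 < 2 * N - 1.
Proof. have := N2; lra. Qed.

Lemma fr_y_4 (r : relF n) a : r.2 = S1 a -> is4r (val r.1) ->
  fr r yv = (Z / K - 1) * (2 * N - 1).
Proof.
move=> H2 H4; rewrite /fr /Xr H2 sumS1_y /xr /yv /gK /Gr H4.
have := Zpos; have := m2; have := N2; rewrite /K => *.
field.
by rewrite Nneq0 mneq0 Zneq0.
Qed.

Lemma fr_y_o (r : relF n) a S : r.2 = ~: S -> S \subset S1 a -> is4r (val r.1) = false ->
  fr r yv <= (Z - 1) / (2 * N - 1).
Proof.
move=> H2 sub H4; rewrite /fr /Xr H2 sum_compl /xr /yv /gK /Gr H4.
have hS := sum_sub sub; rewrite sumS1_y in hS.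
set X := 1 - \sum_(p in S) yv p.
set u := 1 / (2 * N) in hS.
have hu : u * (2 * N) = 1 by rewrite /u; field; rewrite Nneq0.
have hX : 1 - u <= X by rewrite /X; lra.
have N2' := N2. have Zp := Zpos.
have Z1 : 1 <= Z by rewrite Z_eq /K; have := m2; nra.
have u0 : 0 < u by rewrite /u divr_gt0 //; lra.
have u1 : u <= 1 / 4 by rewrite /u ler_pdivrMr; lra.
have Xp : 0 < X by lra.
have -> : (1 - 1 / Z) / (1 / Z) = Z - 1 by field; rewrite Zneq0.
have key : (1 - X) / X <= 1 / (2 * N - 1).
  rewrite ler_pdivrMr // mul1r mulrC ler_pdivlMr; last lra.
  nra.
apply: le_trans (ler_wpM2l _ key) _; first lra.
by rewrite mul1r.
Qed.

Lemma T1_ge0 : 0 <= (Z / K - 1) * (2 * N - 1).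
Proof.
have -> : Z / K = N / m + 3 * N * m.
  rewrite Z_eq /K; field; by rewrite mneq0.
have := m2; have := N2 => *.
apply: mulr_ge0; last lra.
have : 0 <= N / m by rewrite divr_ge0 //; lra.
nra.
Qed.

Lemma T2_ge0 : 0 <= (Z - 1) / (2 * N - 1).
Proof.
have Z1 : 1 <= Z by rewrite Z_eq /K; have := m2; have := N2; nra.
rewrite divr_ge0 //; have := N2; lra.
Qed.

Lemma fr_y_le (r : relF n) : r \in Fam n ->
  fr r yv <= (Z / K - 1) * (2 * N - 1) + (Z - 1) / (2 * N - 1).
Proof.
have h1 := T1_ge0; have h2 := T2_ge0.
rewrite inE => /orP[h|/orP[h|/orP[h|/orP[h|h]]]].
- case/existsP: h => i0 /existsP[t0 /andP[/eqP Hw /eqP H2]].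
  apply: le_trans (fr_y_o H2 (subxx _) (is4_word2 Hw)) _; lra.
- case/existsP: h => i0 /existsP[j0 /existsP[t0 /existsP[s0 /and3P[ij /eqP Hw /eqP H2]]]].
  have H4 : is4r (val r.1) = false.
    by rewrite (is4_word3 Hw) /linv xpair_eqE eq_sym (negbTE ij).
  apply: le_trans (fr_y_o H2 (S2_sub _ _) H4) _; lra.
- case/existsP: h => i0 /existsP[j0 /existsP[t0 /existsP[s0 /and3P[ij /eqP Hw /eqP H2]]]].
  have H4 : is4r (val r.1) = false.
    by rewrite (is4_word3 Hw) /linv xpair_eqE eqxx /=; case: t0 {Hw H2}.
  apply: le_trans (fr_y_o H2 (S2_sub _ _) H4) _; lra.
- case/existsP: h => i0 /existsP[j0 /existsP[t0 /existsP[s0 /and3P[ij /eqP Hw /eqP H2]]]].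
  have H4 : is4r (val r.1) by rewrite (is4_word3 Hw) /linv eqxx.
  rewrite (fr_y_4 H2 H4); lra.
- case/existsP: h => i0 /existsP[j0 /existsP[k0 /existsP[t0 /existsP[s0 /existsP[p0 h]]]]].
  case/and5P: h => ij jk ik /eqP Hw /eqP H2.
  have H4 : is4r (val r.1) = false.
    by rewrite (is4_word3 Hw) /linv xpair_eqE eq_sym (negbTE ik).
  apply: le_trans (fr_y_o H2 (S2_sub _ _) H4) _; lra.
Qed.

Lemma Fmax_y_lt :
  Fmax yv < (2 * (2 * N - 2) * (2 * N - 1) - 1) * (4 * N - 3).
Proof.
apply: (@le_lt_trans _ _ ((N/2 + 3*N*(2*N-2) - 1)*(2*N-1) + (4/3)*(1+3*(2*N-2)*(2*N-2)))).
  apply: le_trans (_ : _ <= (Z / K - 1) * (2 * N - 1) + (Z - 1) / (2 * N - 1)) _.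
    apply: bigmax_le; first by have := T1_ge0; have := T2_ge0; lra.
    by move=> r hr; apply: fr_y_le.
  have hm := m2; have hN := N2.
  have mE : m = 2 * N - 2 by rewrite /m mR_eq.
  apply: lerD.
    apply: ler_wpM2r; first lra.
    have -> : Z / K = N / m + 3 * N * m.
      rewrite Z_eq /K; field; by rewrite mneq0.
    have : N / m <= N / 2.
      rewrite ler_pdivrMr; last lra.
      nra.
    rewrite -mE; lra.
  rewrite ler_pdivrMr; last lra.
  rewrite Z_eq /K -mE; nra.
have hN := N2. set t := N - 2. have -> : N = t + 2 by rewrite /t; lra.
have h0 : 0 <= t by rewrite /t; lra.
have h1 : 0 <= t * t by nra. have h2 : 0 <= t * t * t by nra. nra.
Qed.

End YSide.



Section XSide.
Variable R : realType.
Variable n : nat.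

Definition mk4 (b c : letter n) : Psi n :=
  insubd (exist (fun w : rawword n => inPsi w) (b, b, None) (eqxx b) : Psi n) (b, c, Some (linv b)).

Lemma val_mk4 (b c : letter n) : c.1 != b.1 -> val (mk4 b c) = (b, c, Some (linv b)).
Proof. by move=> h; rewrite val_insubd /= eq_sym h /= orbT. Qed.

Lemma mk4_S1 (b c : letter n) : c.1 != b.1 -> mk4 b c \in S1 b.
Proof. by move=> h; rewrite inS1 /firstl val_mk4. Qed.

Lemma word_mk4 (b c : letter n) : c.1 != b.1 -> word (mk4 b c) = [:: b; c; linv b].
Proof. by move=> h; rewrite /word val_mk4. Qed.

Lemma mk4_inj (b : letter n) : {in [pred c : letter n | c.1 != b.1] &, injective (mk4 b)}.
Proof.
move=> c c' hc hc' E; have := congr1 val E; rewrite !val_mk4 //; by case.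
Qed.

Lemma sum_mk4_le (x : Psi n -> R) (x0 : forall p, 0 <= x p) (b : letter n) :
  \sum_(c in [pred c : letter n | c.1 != b.1]) x (mk4 b c) <= \sum_(p in S1 b) x p.
Proof.
rewrite -(big_imset _ (@mk4_inj b)) /=.
have sub : [set mk4 b c | c in [pred c : letter n | c.1 != b.1]] \subset S1 b.
  by apply/fintype.subsetP => p /imsetP [c hc ->]; apply: mk4_S1.
rewrite [X in _ <= X](big_setID [set mk4 b c | c in [pred c : letter n | c.1 != b.1]]) /=.
rewrite (finset.setIidPr sub) lerDl sumr_ge0 // => p _.
Qed.

Lemma Fmax_ge0 (x : Psi n -> R) : 0 <= Fmax x.
Proof.
rewrite /Fmax; apply: (big_rec (fun v => 0 <= v)) => // i v _ hv.
by rewrite le_max hv orbT.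
Qed.

End XSide.

Unset Implicit Arguments. Set Strict Implicit.
Local Open Scope classical_set_scope.

Theorem theorem5p6 (R : realType) (n : nat) (hn : (2 <= n)%N)
    (r : relF n) (hr : type4b r) (xs : Psi n -> R) :
  Delta xs -> Fmax xs = beta_star R n ->
  xr r xs + Xr r xs - xr r xs * Xr r xs < 3 / 4.
Proof.
move=> [xpos xsum] Hb.
have x0 : forall p, 0 <= xs p by move=> p; exact/ltW.
case/existsP: (hr) => i0 /existsP[j0 /existsP[t0 /existsP[s0 /and3P[ij /eqP Hw /eqP H2]]]].
set a0 : letter n := (i0, t0).
set w := fun b : letter n => \sum_(p in S1 b) xs p.
have w0 : forall b, 0 <= w b by move=> b; rewrite /w sumr_ge0.
have hA : Xr r xs = w a0 by rewrite /Xr H2.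
have r1S : r.1 \in S1 a0 by rewrite inS1 -(head_word _ a0) Hw.
have aA : xs r.1 <= w a0 by rewrite /w (bigD1 r.1) //= lerDl sumr_ge0.
have wsum : \sum_b w b = 1 by rewrite /w -partS1 xsum.
have A1 : w a0 <= 1.
  by rewrite -wsum (bigD1 a0) //= lerDl sumr_ge0.
rewrite hA /xr ltNge; apply/negP => Hge.
have a0p := xpos r.1.
have v12 : 1 - w a0 <= 1/2.
  rewrite leNgt; apply/negP => hv.
  have : (1/2) * (1/2) < (1 - xs r.1) * (1 - w a0) by apply: ltr_pM; lra.
  lra.
have hN : 2 <= (n%:R : R) by rewrite (_ : 2 = 2%:R :> R) // ler_nat.
have la0 : linv a0 != a0 by rewrite /linv /a0 xpair_eqE eqxx /=; case: (t0).
case: (@arg_minP _ _ _ (linv a0) [pred b | b != a0] w la0) => b /= ba0 bmin.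
have hb : (2 * n%:R - 1) * w b <= 1 - w a0.
  have E : \sum_(b' | b' != a0) w b' = 1 - w a0.
    by rewrite -wsum [in RHS](bigD1 a0) //= [RHS]addrC addKr.
  rewrite -E.
  have C : #|[pred b' : letter n | b' != a0]| = (n * 2).-1.
    have := cardC1 a0; rewrite card_prod card_ord card_bool => <-.
    by apply: eq_card => z; rewrite !inE.
  apply: le_trans (_ : \sum_(b' in [pred b' : letter n | b' != a0]) w b <= _).
    rewrite sumr_const C -[X in _ <= X]mulr_natr mulrC; apply: ler_wpM2l => //.
    rewrite (_ : (n * 2).-1 = (n * 2 - 1)%N); last by clear -hn; lia.
    rewrite natrB; last by clear -hn; lia.
    rewrite natrM; lra.
  by apply: ler_sum => b' hb'; apply: bmin.
have : (0 < #|[pred c : letter n | c.1 != b.1]|)%N by rewrite card_neq; clear -hn; lia.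
case/card_gt0P => c0 hc0.
case: (@arg_minP _ _ _ c0 [pred c : letter n | c.1 != b.1] (fun c => xs (mk4 b c)) hc0)
  => c /= hc cmin.
set x' := xs (mk4 b c).
have mE : mR R n = 2 * n%:R - 2.
  rewrite /mR natrB; last by clear -hn; lia.
  by rewrite -muln2 natrM mulrC.
have hc' : (2 * n%:R - 2) * x' <= w b.
  apply: le_trans (sum_mk4_le x0 b).
  apply: le_trans (_ : \sum_(c' in [pred c : letter n | c.1 != b.1]) x' <= _).
    by rewrite sumr_const card_neq -[X in _ <= X]mulr_natr (_ : (n.*2 - 2)%:R = mR R n) // mE mulrC.
  by apply: ler_sum => c' hc'; apply: cmin.
have x'p : 0 < x' := xpos _.
set r' : relF n := (mk4 b c, S1 b).
have r'F : r' \in Fam n.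
  rewrite inE; apply/orP; right; apply/orP; right; apply/orP; right; apply/orP; left.
  apply/existsP; exists b.1; apply/existsP; exists c.1.
  apply/existsP; exists b.2; apply/existsP; exists c.2.
  rewrite /= word_mk4 //; apply/and3P; split; first by rewrite eq_sym.
    by rewrite /linv; move: (b) (c) => [? ?] [? ?].
  by move: (b) => [? ?].
have Hle : fr r' xs <= Fmax xs by rewrite /Fmax; apply: (le_bigmax_cond _ _ r'F).
have Hfr : fr r' xs = ((1 - x') / x') * ((1 - w b) / w b) by [].
set N : R := n%:R in hN hb hc' mE Hle Hfr.
have wbp : 0 < w b.
  have : 0 < (2 * N - 2) * x' by apply: mulr_gt0 => //; lra.
  lra.
have P1 : (2 * N - 1) * ((2 * N - 2) * x') <= (2 * N - 1) * w b.
  by apply: ler_wpM2l => //; lra.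
have L1 : 2 * (2 * N - 2) * (2 * N - 1) - 1 <= (1 - x') / x'.
  rewrite ler_pdivlMr //; lra.
have L2 : 4 * N - 3 <= (1 - w b) / w b.
  rewrite ler_pdivlMr //; lra.
have Lb : (2 * (2 * N - 2) * (2 * N - 1) - 1) * (4 * N - 3) <= fr r' xs.
  rewrite Hfr; apply: ler_pM => //; last lra.
  have : 2 * 1 <= (2 * N - 2) * (2 * N - 1) by apply: ler_pM; lra.
  lra.
have Hy := Fmax_y_lt R hn.
have Hbeta : beta_star R n <= Fmax (@yv R n).
  rewrite /beta_star; apply: ge_inf.
    by exists 0 => z [x _ <-]; apply: Fmax_ge0.
  by exists (@yv R n) => //; apply: Delta_y.
move: Hy; rewrite -/N => Hy.
lra.
Qed.
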